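(* Let $K$ be a linkoid diagram on $S^2$ with exactly one knotoidal component and $\ell>0$ loop components, and let $c$ be a separating crossing of $K$. Then $c$ is removable.
   Context: A linkoid diagram on $S^2$ is an immersion of a disjoint union of oriented intervals (knotoidal components, with tail and head endpoints) and oriented circles (loop components) into $S^2$ whose only singularities are transverse double points (crossings) away from the endpoints, with over/under information. A diagram is split if its universe (the graph with crossings as degree-4 vertices and endpoints as degree-1 vertices) is disconnected. A crossing $c$ is separating if one of its two possible (unoriented) smoothings yields a split diagram. A crossing $c$ is removable if it is attached on one side to a $(1,1)$-tangle: there is a closed disk $\Delta\subset S^2$ not containing $c$ and containing no endpoints of knotoidal components, whose boundary meets the diagram transversally in exactly two points, such that these two points are joined to $c$ by two crossing-free arcs of the diagram that are adjacent half-edges at $c$ (one leaving $c$ into $\Delta$, one returning from $\Delta$ to $c$); the part of the diagram in $\Delta$ is the tangle $T$, and $c$ can be removed by Reidemeister moves by flipping $T$ over.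
   Formalization: A crossing c counts as separating only when K itself is non-split, so its universe is connected, and one of the two smoothings of c yields a split diagram. The paper assumes this as well. *)

(* Defs.v *)
(* Linkoid diagrams on S^2 encoded as combinatorial maps
   (rotation systems). *)
From mathcomp Require Import all_boot perm.
Set Implicit Arguments. Unset Strict Implicit. Unset Printing Implicit Defensive.

(* A (candidate) linkoid diagram with dart (half-edge) set D:
   - [sigma]  : rotation around vertices (counterclockwise cyclic order of the
                half-edges at a vertex); vertices = sigma-orbits.
                Crossings are the 4-element orbits, endpoints of knotoidal
                components are the fixed points of sigma (degree-1 vertices).
   - [alpha]  : fixed-point-free involution pairing the two half-edges of an
                edge of the universe.
   - [over d] : for a dart at a crossing, whether the strand through d is the
                over-strand.
   - [out d]  : whether the orientation of the component runs along d away
                from its vertex (for an endpoint dart: true = tail, false = head).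
   - [free_loops] : number of loop components with no crossing at all
                (crossing-free circles, which carry no darts). *)
Record diagram (D : finType) := Diagram {
  sigma : {perm D};
  alpha : {perm D};
  over : D -> bool;
  out : D -> bool;
  free_loops : nat
}.

Section Diagrams.
Variable D : finType.
Variable K : diagram D.

Local Notation s := (sigma K).
Local Notation a := (alpha K).

Definition ncomp (r : rel D) : nat := #|[set x | root r x == x]|.

Definition symrel (f : D -> D) : rel D := [rel x y | (y == f x) || (x == f y)].

Definition is_endpoint (x : D) : bool := s x == x.
Definition is_crossing (x : D) : bool := s x != x.

(* face permutation *)
Definition phi (x : D) : D := s (a x).

Definition univ : rel D :=
  [rel x y | [|| y == s x, x == s y, y == a x | x == a y]].

(* number of connected components of the universe (crossing-free circles are
   components of their own) *)
Definition n_univ : nat := ncomp univ + free_loops K.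

Definition split_diagram : Prop := 2 <= n_univ.

Definition is_linkoid : Prop :=
  [/\ (forall x, a (a x) = x /\ a x != x),
      (forall x, s x = x \/ (s (s x) != x /\ s (s (s (s x))) = x)),
      (forall x, s x != x -> over K (s (s x)) = over K x /\ over K (s x) = ~~ over K x),
      (forall x, out K (a x) = ~~ out K x /\ (s x != x -> out K (s (s x)) = ~~ out K x))
    & (* genus 0 (embedding in S^2) for every connected component, via Euler:
         sum over components of (V - E + F) = 2 * #components *)
      2 * (ncomp (symrel s) + ncomp (symrel phi)) = #|D| + 4 * ncomp univ].

(* components of the link(oid): follow an edge, or go straight through a
   crossing *)
Definition strand : rel D :=
  [rel x y | [|| y == a x, x == a y,
                 (s x != x) && (y == s (s x)) | (s y != y) && (x == s (s y))]].

Definition comp_has_endpoint (x : D) : bool :=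
  [exists y, connect strand x y && is_endpoint y].

Definition num_knotoidal : nat :=
  #|[set x | (root strand x == x) && comp_has_endpoint x]|.

Definition num_loops : nat :=
  #|[set x | (root strand x == x) && ~~ comp_has_endpoint x]| + free_loops K.

Definition cdarts (c : D) : {set D} := [set c; s c; s (s c); s (s (s c))].

(* universe after smoothing the crossing of c; [b] selects one of the two
   unoriented smoothings: the half-edges p, s p are joined and so are
   s^2 p, s^3 p, where p = c or p = s c.  The darts at c become interior
   points of the two new arcs. *)
Definition smooth_univ (c : D) (b : bool) : rel D :=
  let p := if b then s c else c in
  [rel x y | [|| y == a x, x == a y,
     (x \notin cdarts c) && (y \notin cdarts c) && ((y == s x) || (x == s y)),
     (x == p) && (y == s p), (y == p) && (x == s p),
     (x == s (s p)) && (y == s (s (s p))) |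
     (y == s (s p)) && (x == s (s (s p)))]].

Definition n_smooth (c : D) (b : bool) : nat := ncomp (smooth_univ c b) + free_loops K.

Definition separating (c : D) : Prop :=
  ~ split_diagram /\ exists b : bool, 2 <= n_smooth c b.

(* c is removable: there are adjacent half-edges h, s h at c and a disk
   Delta, not containing c nor endpoints, whose boundary meets the diagram in
   exactly two points, one on the edge of h and one on the edge of s h.
   Combinatorially: either the two half-edges form a single edge (Delta
   contains a crossing-free arc), or the darts S of the vertices inside Delta
   are attached to the rest of the diagram exactly by the edges of h and s h. *)
Definition removable (c : D) : Prop :=
  exists2 h, h \in cdarts c &
    (a h = s h) \/
    exists S : {set D},
      [/\ forall x, x \in S -> s x \in S,
          forall x, x \in S -> (x \notin cdarts c) && is_crossing x
        & forall x, x \notin S -> (a x \in S <-> (x = h \/ x = s h))].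

End Diagrams.

(* Main.v *)
Require Import Defs.
From mathcomp Require Import all_boot perm zify.
Set Implicit Arguments. Unset Strict Implicit. Unset Printing Implicit Defensive.

Lemma odd_fix (T : finType) (f : T -> T) (X : {set T}) :
  (forall x, x \in X -> f x \in X /\ f (f x) = x) ->
  odd #|X| = odd #|[set x in X | f x == x]|.
Proof.
move: {2}#|X| (leqnn #|X|) => n; elim: n X => [|n IH] X hX H.
  have hs : #|[set x in X | f x == x]| <= #|X|.
    by apply: subset_leq_card; apply/subsetP=> y; rewrite inE => /andP[].
  move: hX; rewrite leqn0 => /eqP h0; move: hs; rewrite h0 leqn0 => /eqP ->.
  done.
case: (set_0Vmem X) => [X0|[x xX]].
  have hs : #|[set x in X | f x == x]| <= #|X|.
    by apply: subset_leq_card; apply/subsetP=> y; rewrite inE => /andP[].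
  move: hs; rewrite X0 cards0 leqn0 => /eqP ->; done.
have [fxX ffx] := H x xX.
case: (eqVneq (f x) x) => fx.
- have H' : forall y, y \in X :\ x -> f y \in X :\ x /\ f (f y) = y.
    move=> y; rewrite !inE => /andP[yx yX]; have [fyX ffy] := H y yX.
    split => //; rewrite fyX andbT; apply/eqP => fyx; move/eqP: yx; apply.
    by rewrite -ffy fyx fx.
  have := IH (X :\ x) _ H'.
  have -> : [set y in X :\ x | f y == y] = [set y in X | f y == y] :\ x.
    by apply/setP => y; rewrite !inE; case: (y == x); rewrite ?andbF.
  rewrite (cardsD1 x X) xX (cardsD1 x [set y in X | f y == y]) !inE xX fx eqxx /=.
  move=> -> //; move: hX; rewrite (cardsD1 x X) xX.
  by rewrite add1n ltnS.
- set Z := [set x; f x].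
  have H' : forall y, y \in X :\: Z -> f y \in X :\: Z /\ f (f y) = y.
    move=> y; rewrite !inE => /andP[yZ yX]; have [fyX ffy] := H y yX.
    split => //; rewrite fyX andbT; apply: contra yZ => /orP[/eqP e|/eqP e].
      by rewrite -ffy e eqxx orbT.
    by rewrite -ffy -ffx (f_equal f e) eqxx.
  have := IH (X :\: Z) _ H'.
  have -> : [set y in X :\: Z | f y == y] = [set y in X | f y == y].
    apply/setP => y; rewrite !inE; case yX: (y \in X); rewrite ?andbF //=.
    case: eqP => [->|_]; first by rewrite (negbTE fx).
    case: eqP => [->|_] //=; rewrite ffx; apply/esym/negbTE; rewrite eq_sym.
    done.
  have cX : #|X| = #|X :\: Z| + 2.
    rewrite -(cardsID Z X) addnC; congr (_ + _).
    have -> : X :&: Z = Z.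
      by apply/setIidPr; apply/subsetP => y; rewrite !inE => /orP[]/eqP->.
    by rewrite cards2 eq_sym fx.
  rewrite cX addn2 /= negbK; move=> -> //.
  by move: hX; rewrite cX addn2 !ltnS; apply: leq_trans.
Qed.


Section Main.
Variable D : finType.
Variable K : diagram D.
Local Notation s := (sigma K).
Local Notation a := (alpha K).
Hypothesis aa : forall x, a (a x) = x.
Hypothesis afree : forall x, a x != x.
Hypothesis s4 : forall x, s (s (s (s x))) = x.
Hypothesis s2 : forall x, s x != x -> s (s x) != x.
Variable c : D.
Hypothesis cc : s c != c.

Definition tt (x : D) := if s x == x then x else s (s x).
Definition rho (x : D) := tt (a x).

Lemma tt_inv x : tt (tt x) = x.
Proof.
rewrite /tt; case: (eqVneq (s x) x) => hx; first by rewrite hx eqxx.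
case: (eqVneq (s (s (s x))) (s (s x))) => h; last by rewrite s4.
by exfalso; move/eqP: hx; apply; apply: (@perm_inj _ s); apply: (@perm_inj _ s).
Qed.

Lemma rho_inj : injective rho.
Proof.
apply: (can_inj (g := fun y => a (tt y))) => x; by rewrite /rho tt_inv aa.
Qed.

Lemma dihedral k x : iter k rho (tt (iter k rho x)) = tt x.
Proof.
elim: k x => [//|k IH] x.
rewrite iterSr iterS.
have -> : rho (tt (rho (iter k rho x))) = tt (iter k rho x).
  by rewrite /rho tt_inv aa.
exact: IH.
Qed.

Lemma strand_step y z : strand K y z -> z = a y \/ z = tt y.
Proof.
rewrite /strand /= => /or4P[/eqP->|/eqP->|/andP[h /eqP->]|/andP[h /eqP->]].
- by left.
- by left; rewrite aa.
- by right; rewrite /tt (negbTE h).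
- right; have -> : s (s z) = tt z by rewrite /tt (negbTE h).
  by rewrite tt_inv.
Qed.

Lemma orbit_strand e0 y : s e0 = e0 -> connect (strand K) e0 y -> fconnect rho e0 y.
Proof.
move=> he.
have ht : forall z, fconnect rho e0 z -> fconnect rho e0 (tt z).
  move=> z hz; have h : iter (findex rho e0 z) rho (tt z) = e0.
    by rewrite -{2}(iter_findex hz) dihedral /tt he eqxx.
  rewrite (fconnect_sym rho_inj); rewrite -h; exact: fconnect_iter.
have ha : forall z, fconnect rho e0 z -> fconnect rho e0 (a z).
  move=> z hz; have -> : a z = tt (rho z) by rewrite /rho tt_inv.
  apply: ht; apply: connect_trans hz (fconnect1 _ _).
suff H : forall p x, fconnect rho e0 x -> path (strand K) x p -> fconnect rho e0 (last x p).
  by case/connectP => p pth ->; apply: H.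
elim => [|z p IH] x hx //= /andP[st pth]; apply: IH pth.
by case: (strand_step st) => ->; [apply: ha|apply: ht].
Qed.

Lemma endpoints_le2 :
  (forall e1 e2, s e1 = e1 -> s e2 = e2 -> connect (strand K) e1 e2) ->
  #|[set e | is_endpoint K e]| <= 2.
Proof.
move=> hc; case: (set_0Vmem [set e | is_endpoint K e]) => [->|[e0]]; first by rewrite cards0.
rewrite inE /is_endpoint => /eqP he0.
set n := order rho e0.
apply: (@leq_trans #|[set e0; iter n./2 rho e0]|); last by rewrite cards2; case: (_ != _).
apply: subset_leq_card; apply/subsetP => y; rewrite !inE /is_endpoint => /eqP hy.
have hf := orbit_strand he0 (hc _ _ he0 hy).
set k := findex rho e0 y.
have hk : k < n by exact: findex_max.
have hiy : iter k rho e0 = y by exact: iter_findex.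
have := dihedral k e0; rewrite hiy {1}/tt hy eqxx {1}/tt he0 eqxx -{1}hiy -iterD => h2.
have hn := iter_order rho_inj e0; rewrite -/n in hn.
have fi : forall j, j < n -> iter j rho e0 = e0 -> j = 0.
  move=> j hj hje; have := findex_iter hj; rewrite hje findex0; done.
case: (ltnP (k + k) n) => hkk.
  have := fi _ hkk h2 => /eqP; rewrite addn_eq0 => /andP[/eqP k0 _].
  by rewrite -hiy k0 eqxx.
have hj : k + k - n < n by lia.
have : iter (k + k - n) rho e0 = e0.
  by rewrite -{1}hn -iterD subnK.
move=> /(fi _ hj) /eqP; rewrite subn_eq0 => hle.
have kk : k + k = n by apply/eqP; rewrite eqn_leq hle hkk.
by rewrite -hiy -kk addnn doubleK eqxx orbT.
Qed.


Lemma cd_s x : x \in cdarts K c -> s x \in cdarts K c.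
Proof. by rewrite /cdarts !inE -!orbA => /or4P[]/eqP->; rewrite ?s4 eqxx ?orbT. Qed.

Lemma cd_s' x : s x \in cdarts K c -> x \in cdarts K c.
Proof. by move=> h; rewrite -(s4 x); do 3 apply: cd_s. Qed.

Lemma cdP q : q \in cdarts K c -> forall x,
  (x \in cdarts K c) = [|| x == q, x == s q, x == s (s q) | x == s (s (s q))].
Proof.
rewrite /cdarts !inE -!orbA => /or4P[]/eqP-> x; rewrite ?s4 !inE -!orbA;
 by case: (x == c); case: (x == s c); case: (x == s (s c)); case: (x == s (s (s c))).
Qed.

Lemma cd_cross x : x \in cdarts K c -> s x != x.
Proof.
rewrite /cdarts !inE -!orbA => /or4P[]/eqP->; apply: contra cc => /eqP h; apply/eqP.
- done.
- exact: (@perm_inj _ s).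
- by apply: (@perm_inj _ s); apply: (@perm_inj _ s).
- by apply: (@perm_inj _ s); apply: (@perm_inj _ s); apply: (@perm_inj _ s).
Qed.

Section Side.
Variable q : D.
Variable X : {set D}.
Hypothesis qcd : q \in cdarts K c.
Hypothesis qX : q \in X.
Hypothesis sqX : s q \in X.
Hypothesis s2qX : s (s q) \notin X.
Hypothesis s3qX : s (s (s q)) \notin X.
Hypothesis aX : forall x, x \in X -> a x \in X.
Hypothesis sX : forall x, x \in X -> x \notin cdarts K c -> s x \in X.

Lemma Xcd x : x \in X -> x \in cdarts K c -> x = q \/ x = s q.
Proof.
move=> xX; rewrite (cdP qcd) => /or4P[]/eqP e; [by left|by right| |];
 by move: xX; rewrite e ?(negbTE s2qX) ?(negbTE s3qX).
Qed.


Definition gg (x : D) := if x == q then s q else if x == s q then q else tt x.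

Lemma side_parity : ~~ odd #|[set x in X | is_endpoint K x]|.
Proof.
have ev : ~~ odd #|X|.
  rewrite (@odd_fix _ a X); last by move=> x xX; split; [apply: aX|apply: aa].
  have -> : [set x in X | a x == x] = set0.
    by apply/setP => x; rewrite !inE (negbTE (afree x)) andbF.
  by rewrite cards0.
have qc := cd_cross qcd.
have sqc : s (s q) != s q.
  by apply: contra qc => /eqP h; apply/eqP; apply: (@perm_inj _ s).
have sqcd : s q \in cdarts K c by apply: cd_s.
have ttX : forall x, x \in X -> x \notin cdarts K c ->
    [/\ tt x \in X, tt x \notin cdarts K c & tt (tt x) = x].
  move=> x xX xc; rewrite tt_inv; split => //; rewrite /tt; case: eqP => // _.
  - apply: sX; first by apply: sX.
    by apply: contra xc; apply: cd_s'.
  - by apply: contra xc => h; do 2 apply: cd_s'.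
have ggX : forall x, x \in X -> gg x \in X /\ gg (gg x) = x.
  move=> x xX; rewrite /gg; case: (eqVneq x q) => [->|xq].
    by rewrite (negbTE qc) eqxx.
  case: (eqVneq x (s q)) => [->|xsq]; first by rewrite ?eqxx ?(negbTE qc) ?qc.
  have xc : x \notin cdarts K c.
    by apply/negP => /(Xcd xX)[h|h]; [move/eqP: xq|move/eqP: xsq].
  have [h1 h2 h3] := ttX x xX xc.
  have -> : (tt x == q) = false.
    by apply/negbTE; apply: contra h2 => /eqP ->.
  have -> : (tt x == s q) = false.
    by apply/negbTE; apply: contra h2 => /eqP ->.
  done.
rewrite (@odd_fix _ gg X ggX) in ev.
have <- : [set x in X | gg x == x] = [set x in X | is_endpoint K x]; last done.
apply/setP => x; rewrite !inE /is_endpoint; case xX: (x \in X) => //=.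
rewrite /gg; case: (eqVneq x q) => [->|xq].
  done.
case: (eqVneq x (s q)) => [->|xsq]; first by rewrite eq_sym (negbTE qc) (negbTE sqc).
rewrite /tt; case: (eqVneq (s x) x) => h; first by rewrite eqxx.
by rewrite (negbTE (s2 h)).
Qed.

Lemma side_removable : (forall x, x \in X -> ~~ is_endpoint K x) -> removable K c.
Proof.
move=> noe; exists q => //.
case: (eqVneq (a q) (s q)) => haq; first by left.
right; exists (X :\: cdarts K c); split.
- move=> x; rewrite !in_setD => /andP[xc xX]; rewrite sX //= andbT.
  by apply: contra xc; apply: cd_s'.
- move=> x; rewrite !in_setD => /andP[xc xX]; rewrite xc /=; exact: noe.
- move=> x; rewrite !in_setD negb_and negbK => hx; split.
  + move=> /andP[axc axX].
    have xX : x \in X by rewrite -(aa x); apply: aX.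
    move: hx; rewrite xX orbF => xc; exact: Xcd.
  + move=> [->|->].
    * rewrite aX // andbT; apply/negP => /(Xcd (aX qX))[h|h].
        by move: (afree q); rewrite h eqxx.
      by move: haq; rewrite h eqxx.
    * rewrite aX // andbT; apply/negP => /(Xcd (aX sqX))[h|h].
        have e : a q = s q by rewrite -{1}h aa.
        by move: haq; rewrite e eqxx.
      by move: (afree (s q)); rewrite h eqxx.
Qed.


End Side.

Lemma sym_strand : symmetric (strand K).
Proof.
move=> x y; rewrite /strand /=.
move: (y == a x) (x == a y) ((s x != x) && (y == s (s x))) ((s y != y) && (x == s (s y))) => A B C E.
by case: A; case: B; case: C; case: E.
Qed.

Lemma sym_univ : symmetric (univ K).
Proof.
move=> x y; rewrite /univ /=.
by case: (y == s x); case: (x == s y); case: (y == a x); case: (x == a y).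
Qed.

Lemma sym_smooth b : symmetric (smooth_univ K c b).
Proof.
move=> x y; rewrite /smooth_univ /=.
set P := if b then s c else c.
rewrite [(y \notin _) && (x \notin _)]andbC [(x == s y) || _]orbC.
move: (y == a x) (x == a y) ((x \notin cdarts K c) && (y \notin cdarts K c) && ((y == s x) || (x == s y)))
  ((x == P) && (y == s P)) ((y == P) && (x == s P))
  ((x == s (s P)) && (y == s (s (s P)))) ((y == s (s P)) && (x == s (s (s P)))) => A B C E F G H.
by case: A; case: B; case: C; case: E; case: F; case: G; case: H.
Qed.

Lemma knot_conn : num_knotoidal K = 1 ->
  forall e1 e2, s e1 = e1 -> s e2 = e2 -> connect (strand K) e1 e2.
Proof.
move=> hk e1 e2 h1 h2.
have syms : connect_sym (strand K) := sym_connect_sym sym_strand.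
have inR : forall e, s e = e -> root (strand K) e \in
    [set x | (root (strand K) x == x) && comp_has_endpoint K x].
  move=> e he; rewrite inE root_root // eqxx /=; apply/existsP; exists e.
  rewrite /is_endpoint he eqxx andbT syms; exact: connect_root.
have : #|[set x | (root (strand K) x == x) && comp_has_endpoint K x]| <= 1.
  by move: hk; rewrite /num_knotoidal => ->.
move/card_le1_eqP => H.
rewrite -(root_connect syms); apply/eqP.
by rewrite (H _ _ (inR _ h1) (inR _ h2)).
Qed.

Lemma main_sec b : ~ split_diagram K -> 2 <= n_smooth K c b -> num_knotoidal K = 1 ->
  removable K c.
Proof.
move=> nsplit hb hk.
have symu : connect_sym (univ K) := sym_connect_sym sym_univ.
have hu : forall x y, connect (univ K) x y.
  have h1 : #|[set x | root (univ K) x == x]| <= 1.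
    by move: nsplit; rewrite /split_diagram /n_univ /ncomp; lia.
  move/card_le1_eqP: h1 => H x y.
  rewrite -(root_connect symu); apply/eqP.
  by rewrite (H (root (univ K) x) (root (univ K) y)) // inE root_root.
have fl0 : free_loops K = 0.
  have : 0 < ncomp (univ K).
    by apply/card_gt0P; exists (root (univ K) c); rewrite inE root_root.
  by move: nsplit; rewrite /split_diagram /n_univ; lia.
have Pcd : (if b then s c else c) \in cdarts K c.
  by case: (b); rewrite /cdarts !inE eqxx ?orbT.
set P := if b then s c else c in Pcd.
set r := smooth_univ K c b in hb.
have rsym : symmetric r := sym_smooth b.
have symr : connect_sym r := sym_connect_sym rsym.
have eA : forall x, r x (a x) by move=> x; rewrite /r /smooth_univ /= eqxx.
have eS : forall x, x \notin cdarts K c -> s x \notin cdarts K c -> r x (s x).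
  by move=> x h1 h2; rewrite /r /smooth_univ /= h1 h2 eqxx /= !orbT.
have e01 : r P (s P) by rewrite /r /smooth_univ /= -/P !eqxx /= !orbT.
have e10 : r (s P) P by rewrite rsym.
have e23 : r (s (s P)) (s (s (s P))) by rewrite /r /smooth_univ /= -/P !eqxx /= !orbT.
have e32 : r (s (s (s P))) (s (s P)) by rewrite rsym.
have ncd : forall x, x \notin cdarts K c -> s x \notin cdarts K c.
  by move=> x; apply: contra; apply: cd_s'.
have nsep : ~~ connect r P (s (s P)).
  apply/negP => h02.
  have cdc : forall z, z \in cdarts K c -> connect r P z.
    move=> z; rewrite (cdP Pcd) => /or4P[]/eqP->.
    - exact: connect0.
    - exact: connect1.
    - exact: h02.
    - exact: connect_trans h02 (connect1 e23).
  have step : forall y z, connect r P y -> univ K y z -> connect r P z.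
    move=> y z hy; rewrite /univ /= => /or4P[]/eqP ez.
    - case yc: (y \in cdarts K c).
        by apply: cdc; rewrite ez; apply: cd_s.
      have zc : z \notin cdarts K c by rewrite ez; apply: ncd; rewrite yc.
      apply: (connect_trans hy); apply: connect1; rewrite ez.
      by apply: eS; [rewrite yc | rewrite -ez].
    - case zc: (z \in cdarts K c); first by apply: cdc.
      have yc : y \notin cdarts K c by rewrite ez; apply: ncd; rewrite zc.
      apply: (connect_trans hy); apply: connect1; rewrite ez rsym.
      by apply: eS; [rewrite zc | rewrite -ez].
    - by apply: (connect_trans hy); apply: connect1; rewrite ez.
    - by apply: (connect_trans hy); apply: connect1; rewrite ez rsym.
  have all : forall x, connect r P x.
    suff H : forall pth y, connect r P y -> path (univ K) y pth -> connect r P (last y pth).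
      by move=> x; have /connectP[pth hp ->] := hu P x; apply: H.
    elim => [|z pth IH] y hy //= /andP[st hp]; apply: IH hp.
    exact: step st.
  have : #|[set x | root r x == x]| <= 1.
    apply: (@leq_trans #|[set root r P]|); last by rewrite cards1.
    apply: subset_leq_card; apply/subsetP => x; rewrite !inE => /eqP hx.
    by rewrite -hx (root_connect symr) symr.
  by move: hb; rewrite /n_smooth /ncomp fl0 -/r; lia.
set XA := [set y | connect r P y].
set XB := [set y | connect r (s (s P)) y].
have aXA : forall x, x \in XA -> a x \in XA.
  by move=> x; rewrite !inE => h; apply: connect_trans h (connect1 (eA x)).
have aXB : forall x, x \in XB -> a x \in XB.
  by move=> x; rewrite !inE => h; apply: connect_trans h (connect1 (eA x)).
have sXA : forall x, x \in XA -> x \notin cdarts K c -> s x \in XA.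
  move=> x hx xc; rewrite inE; move: hx; rewrite inE => h.
  by apply: connect_trans h (connect1 (eS _ xc (ncd _ xc))).
have sXB : forall x, x \in XB -> x \notin cdarts K c -> s x \in XB.
  move=> x hx xc; rewrite inE; move: hx; rewrite inE => h.
  by apply: connect_trans h (connect1 (eS _ xc (ncd _ xc))).
have qA : P \in XA by rewrite inE connect0.
have sqA : s P \in XA by rewrite inE connect1.
have s2qA : s (s P) \notin XA by rewrite inE.
have s3qA : s (s (s P)) \notin XA.
  by rewrite inE; apply: contra nsep => h; apply: connect_trans h (connect1 e32).
have Qcd : s (s P) \in cdarts K c by do 2 apply: cd_s.
have qB : s (s P) \in XB by rewrite inE connect0.
have sqB : s (s (s P)) \in XB by rewrite inE connect1.
have s2qB : s (s (s (s P))) \notin XB by rewrite inE s4 symr.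
have s3qB : s (s (s (s (s P)))) \notin XB.
  rewrite inE s4; apply: contra nsep => h; rewrite symr.
  by apply: connect_trans h (connect1 e10).
set EA := [set x in XA | is_endpoint K x].
set EB := [set x in XB | is_endpoint K x].
have pA : ~~ odd #|EA| by apply: (side_parity Pcd qA sqA s2qA s3qA aXA sXA).
have pB : ~~ odd #|EB| by apply: (side_parity Qcd qB sqB s2qB s3qB aXB sXB).
have le2 := endpoints_le2 (knot_conn hk).
have dis : EA :&: EB = set0.
  apply/setP => x; rewrite !inE; apply/negP => /andP[/andP[hA _] /andP[hB _]].
  by move/negP: nsep; apply; apply: connect_trans hA _; rewrite symr.
have hsum : #|EA| + #|EB| <= 2.
  apply: leq_trans le2.
  have : #|EA :|: EB| = #|EA| + #|EB| by rewrite cardsU dis cards0 subn0.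
  move <-; apply: subset_leq_card; apply/subsetP => x; rewrite !inE.
  by case/orP => /andP[].
have : #|EA| = 0 \/ #|EB| = 0.
  case: (posnP #|EA|) => hA; [by left|right].
  have h2 : 1 < #|EA| by move: pA hA; case: #|EA| => [|[|n]].
  have := leq_trans hsum h2; rewrite -{2}[#|EA|]addn0 leq_add2l leqn0.
  by move/eqP.
case => /eqP; rewrite cards_eq0 => /eqP h0.
- apply: (side_removable Pcd qA sqA s2qA s3qA aXA sXA) => x xA; apply/negP => he.
  have : x \in EA by rewrite inE xA he.
  by rewrite h0 inE.
- apply: (side_removable Qcd qB sqB s2qB s3qB aXB sXB) => x xB; apply/negP => he.
  have : x \in EB by rewrite inE xB he.
  by rewrite h0 inE.
Qed.

End Main.

Theorem lemma4p5 (D : finType) (K : diagram D) (c : D) :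
  is_linkoid K ->
  is_crossing K c ->
  num_knotoidal K = 1 ->
  0 < num_loops K ->
  separating K c ->
  removable K c.
Proof.
move=> [lA lS _ _ _] hc hk _ [nsplit [b hb]].
have aa : forall x, alpha K (alpha K x) = x by move=> x; case: (lA x).
have afree : forall x, alpha K x != x by move=> x; case: (lA x).
have s4 : forall x, sigma K (sigma K (sigma K (sigma K x))) = x.
  by move=> x; case: (lS x) => [h|[_ h]] //; rewrite !h.
have s2 : forall x, sigma K x != x -> sigma K (sigma K x) != x.
  by move=> x hx; case: (lS x) => [h|[h _]] //; move: hx; rewrite h eqxx.
exact: (main_sec aa afree s4 s2 hc nsplit hb hk).
Qed.
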